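(* Assume (A1)–(A5). Then for all $(t,x,y)\in(0,+\infty)\times\mathbb{R}^2$, $\underline{u}(t,x+y)-\underline{u}(t,x)\le|y|$.
   Context: Let $R,p,G:\mathbb{R}\to\mathbb{R}$; for each integer $K\ge1$ let $\delta_K>0$ with $\delta_K\to0$ and $h_K:=\delta_K\log K\to0$. (A1) $R,p$ Lipschitz with $\underline{R}\le R\le\overline{R}$, $0<\underline{p}\le p\le\overline{p}$. (A2) $G$ positive continuous, $\int G=1$, $G(x)=f(x)e^{-|x|}$ with $0<\min f\le f\le\sup f<\infty$. (A3) $u^{K,0}(i\delta_K)\le-A|i\delta_K|+B_1$ for all $i,K$, constants $A,B_1>0$. (A4) There is $L\in(0,1)$ with $|u^{K,0}((i+1)\delta_K)-u^{K,0}(i\delta_K)|\le L\delta_K$. (A5) The linear interpolation of $u^{K,0}$ converges locally uniformly to a continuous $u^0$. Let $u^K$ solve $\frac{d}{dt}u^{K}_i=R(i\delta_K)+\sum_{l}p((l+i)\delta_K)h_KG(lh_K)e^{\log K(u^{K}_{l+i}-u^{K}_i)}$, $u^K_i(0)=u^{K,0}(i\delta_K)$, and $\widetilde u^K(t,x)=u^K_i(t)(1-\frac{x}{\delta_K}+i)+u^K_{i+1}(t)(\frac{x}{\delta_K}-i)$ for $x\in[i\delta_K,(i+1)\delta_K)$. Define $\underline{u}(t,x)=\liminf_{K\to\infty,(s,y)\to(t,x)}\widetilde u^K(s,y)$. *)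

(* Defs.v *)
From Stdlib Require Import Reals ZArith.
From Coquelicot Require Import Coquelicot.
Open Scope R_scope.

Definition is_zsum (f : Z -> R) (s : R) : Prop :=
  exists a b : R,
    is_series (fun n : nat => f (Z.of_nat n)) a /\
    is_series (fun n : nat => f (- (Z.of_nat n + 1))%Z) b /\
    s = a + b.

(* Linear interpolation on the grid delta*Z of the lattice values v :
   for x in [i delta, (i+1) delta), i = floor(x/delta). *)
Definition lin_interp (v : Z -> R) (delta x : R) : R :=
  let i := Int_part (x / delta) in
  v i * (1 - x / delta + IZR i) + v (i + 1)%Z * (x / delta - IZR i).

Definition hK (delta : nat -> R) (K : nat) : R := delta K * ln (INR K).

Definition ode_term (Rf p G : R -> R) (delta : nat -> R) (K : nat)
  (w : Z -> R) (i l : Z) : R :=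
  p (IZR (l + i) * delta K) * hK delta K * G (IZR l * hK delta K)
    * exp (ln (INR K) * (w (l + i)%Z - w i)).

(* underline u(t,x) = liminf_{K -> oo, (s,y) -> (t,x)} tilde u^K(s,y)
   = sup_{eps>0, N} inf { tilde u^K(s,y) : K >= max(N,1), |s-t|<eps, |y-x|<eps } *)
Definition lower_relaxed (u : nat -> Z -> R -> R) (delta : nat -> R)
  (t x : R) : Rbar :=
  Rbar_lub (fun w => exists eps : R, exists N : nat, 0 < eps /\
    w = Rbar_glb (fun z => exists (K : nat) (s y : R),
          (1 <= K)%nat /\ (N <= K)%nat /\ Rabs (s - t) < eps /\
          Rabs (y - x) < eps /\
          z = Finite (lin_interp (fun i => u K i s) (delta K) y))).

(* Main.v *)
Require Import Defs.
From Stdlib Require Import Reals ZArith.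
From Coquelicot Require Import Coquelicot.
From Stdlib Require Import Lra Lia Classical.
Open Scope R_scope.

Lemma series_partial_le (a : nat -> R) (l : R) :
  (forall n, 0 <= a n) -> is_series a l -> forall N, sum_n a N <= l.
Proof.
  intros Hp Hs N. apply (is_lim_seq_incr_compare (sum_n a) l).
  - exact Hs.
  - intro n. rewrite sum_Sn. unfold plus; simpl. specialize (Hp (S n)). lra.
Qed.

Lemma series_nonneg (a : nat -> R) (l : R) :
  (forall n, 0 <= a n) -> is_series a l -> 0 <= l.
Proof.
  intros Hp Hs. eapply Rle_trans; [| apply (series_partial_le a l Hp Hs 0)].
  rewrite sum_O. apply Hp.
Qed.

Lemma sum_range_gt (a : nat -> R) (c : R) (j0 : nat) :
  (forall n, 0 <= a n) -> forall n,
  (forall k, (k <= n)%nat -> c < a (j0 + k)%nat) ->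
  INR (S n) * c < sum_n a (j0 + n).
Proof.
  intros Hp n. induction n as [|n IH]; intros H.
  - rewrite Nat.add_0_r. simpl. specialize (H 0%nat (le_n _)). rewrite Nat.add_0_r in H.
    destruct j0 as [|j].
    + rewrite sum_O. lra.
    + rewrite sum_Sn. unfold plus; simpl.
      assert (0 <= sum_n a j).
      { clear H. induction j. rewrite sum_O. apply Hp. rewrite sum_Sn. unfold plus; simpl.
        specialize (Hp (S j)). lra. }
      lra.
  - rewrite Nat.add_succ_r, sum_Sn. unfold plus; simpl.
    assert (H1 : INR (S n) * c < sum_n a (j0 + n)) by (apply IH; intros; apply H; lia).
    assert (H2 := H (S n) (le_n _)). rewrite Nat.add_succ_r in H2.
    change (match n with 0%nat => 1 | S _ => INR n + 1 end) with (INR (S n)). lra.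
Qed.

Lemma zsum_range (F : Z -> R) (Ssum : R) (Fpos : forall l, 0 <= F l)
  (HS : is_zsum F Ssum) (iota : nat -> Z)
  (Hi : iota = (fun j => Z.of_nat j) \/ iota = (fun j => (- (Z.of_nat j + 1))%Z))
  (j0 n : nat) (c : R) :
  (forall k, (k <= n)%nat -> c < F (iota (j0 + k)%nat)) ->
  INR (S n) * c < Ssum.
Proof.
  intros H. destruct HS as [a [b [Ha [Hb ->]]]].
  destruct Hi as [-> | ->].
  - assert (H1 := sum_range_gt (fun n => F (Z.of_nat n)) c j0 (fun _ => Fpos _) n H).
    assert (H2 := series_partial_le _ _ (fun _ => Fpos _) Ha (j0 + n)).
    assert (H3 := series_nonneg _ _ (fun _ => Fpos _) Hb). lra.
  - assert (H1 := sum_range_gt (fun n => F (- (Z.of_nat n + 1))%Z) c j0 (fun _ => Fpos _) n H).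
    assert (H2 := series_partial_le _ _ (fun _ => Fpos _) Hb (j0 + n)).
    assert (H3 := series_nonneg _ _ (fun _ => Fpos _) Ha). lra.
Qed.

Lemma exp_convex (lam a b L : R) : 0 <= lam <= 1 ->
  exp (L * (lam * a + (1 - lam) * b)) <= lam * exp (L * a) + (1 - lam) * exp (L * b).
Proof.
  intros Hl. set (c := lam * a + (1 - lam) * b).
  assert (Ea : exp (L * a) = exp (L * c) * exp (L * (a - c))) by (rewrite <- exp_plus; f_equal; ring).
  assert (Eb : exp (L * b) = exp (L * c) * exp (L * (b - c))) by (rewrite <- exp_plus; f_equal; ring).
  rewrite Ea, Eb.
  assert (P := exp_pos (L * c)).
  assert (A1 := exp_ineq1_le (L * (a - c))).
  assert (A2 := exp_ineq1_le (L * (b - c))).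
  assert (lam * exp (L * c) * (1 + L * (a - c)) + (1 - lam) * exp (L * c) * (1 + L * (b - c)) = exp (L * c)).
  { unfold c. ring. }
  assert (lam * exp (L * c) * (1 + L * (a - c)) <= lam * (exp (L * c) * exp (L * (a - c)))).
  { rewrite Rmult_assoc. apply Rmult_le_compat_l; [lra|]. apply Rmult_le_compat_l; lra. }
  assert ((1-lam) * exp (L * c) * (1 + L * (b - c)) <= (1-lam) * (exp (L * c) * exp (L * (b - c)))).
  { rewrite Rmult_assoc. apply Rmult_le_compat_l; [lra|]. apply Rmult_le_compat_l; lra. }
  lra.
Qed.

Lemma Int_part_shift (r : R) (m : Z) : Int_part (r + IZR m) = (Int_part r + m)%Z.
Proof.
  unfold Int_part. destruct (base_Int_part r) as [B1 B2]. unfold Int_part in B1, B2.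
  assert (E : (up r - 1 + m + 1)%Z = up (r + IZR m)).
  { rewrite ?minus_IZR in B1, B2. apply up_tech; rewrite ?plus_IZR, ?minus_IZR; simpl; lra. }
  lia.
Qed.

Lemma fermat_left (f : R -> R) (x l r : R) : 0 < r -> is_derive f x l ->
  (forall s, x - r < s < x -> f x <= f s) -> l <= 0.
Proof.
  intros Hr Hd Hm. apply is_derive_Reals in Hd.
  destruct (Rle_or_lt l 0) as [H|H]; [exact H|exfalso].
  assert (He : 0 < l / 2) by lra.
  destruct (Hd (l/2) He) as [d Hdd].
  set (hh := - Rmin d r / 2).
  assert (Hmin : 0 < Rmin d r) by (apply Rmin_pos; [apply cond_pos|lra]).
  assert (hh <> 0) by (unfold hh; lra).
  assert (Rabs hh < d).
  { unfold hh. rewrite Rabs_left by lra. assert (Rmin d r <= d) by apply Rmin_l. assert (0 < d) by apply cond_pos. lra. }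
  specialize (Hdd hh H0 H1).
  assert (Hq : (f (x + hh) - f x) / hh <= 0).
  { assert (f x <= f (x + hh)).
    { apply Hm. unfold hh. assert (Rmin d r <= r) by apply Rmin_r. lra. }
    assert (/ hh < 0) by (apply Rinv_lt_0_compat; unfold hh; lra).
    unfold Rdiv. assert (0 <= f (x + hh) - f x) by lra. nra. }
  apply Rabs_def2 in Hdd. lra.
Qed.

Lemma time_lemma (f1 f2 : R -> R) (P1 P2 : R -> R -> Prop) (r1 r2 Rlo lam a s : R) :
  Rlo <= r1 -> Rlo <= r2 -> 0 <= lam <= 1 -> 0 < a -> a < s ->
  (forall σ, 0 < σ -> exists S1 S2, P1 σ S1 /\ P2 σ S2 /\
      is_derive f1 σ (r1 + S1) /\ is_derive f2 σ (r2 + S2)) ->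
  exists s0 S1 S2, a < s0 <= s /\ P1 s0 S1 /\ P2 s0 S2 /\
    (f1 s0 * lam + f2 s0 * (1 - lam)) - ln (s0 - a) <= (f1 s * lam + f2 s * (1 - lam)) - ln (s - a) /\
    lam * S1 + (1 - lam) * S2 <= / (s0 - a) - Rlo.
Proof.
  intros Hr1 Hr2 Hl Ha Has Hd.
  set (g := fun σ => f1 σ * lam + f2 σ * (1 - lam)).
  set (phi := fun σ => g σ - ln (σ - a)).
  assert (Dg : forall σ, 0 < σ -> exists S1 S2, P1 σ S1 /\ P2 σ S2 /\
      is_derive g σ (lam * (r1 + S1) + (1 - lam) * (r2 + S2))).
  { intros σ Hσ. destruct (Hd σ Hσ) as [S1 [S2 [H1 [H2 [D1 D2]]]]].
    exists S1, S2. split; [exact H1|]. split; [exact H2|].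
    unfold g. apply (is_derive_ext (fun σ => lam * f1 σ + (1 - lam) * f2 σ)).
    { intro t0. change (lam * f1 t0 + (1 - lam) * f2 t0 = f1 t0 * lam + f2 t0 * (1 - lam)). ring. }
    apply (is_derive_plus (fun σ => lam * f1 σ) (fun σ => (1-lam) * f2 σ));
      apply is_derive_scal; assumption. }
  assert (Dphi : forall σ, a < σ -> exists S1 S2, P1 σ S1 /\ P2 σ S2 /\
      is_derive phi σ (lam * (r1 + S1) + (1 - lam) * (r2 + S2) - / (σ - a))).
  { intros σ Hσ. destruct (Dg σ ltac:(lra)) as [S1 [S2 [H1 [H2 D]]]].
    exists S1, S2. split; [exact H1|]. split; [exact H2|].
    unfold phi. apply (is_derive_minus g (fun σ => ln (σ - a))); [exact D|].
    auto_derive; [lra|]. field. lra. }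
  assert (Cg : forall σ, 0 < σ -> continuity_pt g σ).
  { intros σ Hσ. destruct (Dg σ Hσ) as [S1 [S2 [_ [_ D]]]].
    apply continuity_pt_filterlim. apply (ex_derive_continuous g). eexists; exact D. }
  assert (Cphi : forall σ, a < σ -> continuity_pt phi σ).
  { intros σ Hσ. destruct (Dphi σ Hσ) as [S1 [S2 [_ [_ D]]]].
    apply continuity_pt_filterlim. apply (ex_derive_continuous phi). eexists; exact D. }
  destruct (continuity_ab_min g a s ltac:(lra)) as [mx [Hmx Hmxr]].
  { intros c Hc. apply Cg. lra. }
  set (th := Rmin ((s - a) / 2) (exp (- (phi s - g mx) - 1))).
  assert (Hth : 0 < th) by (apply Rmin_pos; [lra | apply exp_pos]).
  assert (Hth1 : th <= (s - a) / 2) by apply Rmin_l.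
  assert (Hth2 : th <= exp (- (phi s - g mx) - 1)) by apply Rmin_r.
  assert (Hpa : phi s < phi (a + th)).
  { unfold phi at 2. replace (a + th - a) with th by ring.
    assert (ln th <= - (phi s - g mx) - 1).
    { rewrite <- (ln_exp (- (phi s - g mx) - 1)). apply ln_le; assumption. }
    assert (g mx <= g (a + th)) by (apply Hmx; lra). lra. }
  destruct (continuity_ab_min phi (a + th) s ltac:(lra)) as [s0 [Hs0 Hs0r]].
  { intros c Hc. apply Cphi. lra. }
  assert (Hs0s : phi s0 <= phi s) by (apply Hs0; lra).
  assert (Hs0a : a + th < s0).
  { destruct (Rle_lt_or_eq_dec _ _ (proj1 Hs0r)) as [H|H]; [exact H|].
    rewrite <- H in Hs0s. lra. }
  destruct (Dphi s0 ltac:(lra)) as [S1 [S2 [H1 [H2 D]]]].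
  exists s0, S1, S2. split; [lra|]. split; [exact H1|]. split; [exact H2|]. split.
  - exact Hs0s.
  - assert (Hf := fermat_left phi s0 _ (s0 - (a + th)) ltac:(lra) D).
    assert (lam * (r1 + S1) + (1 - lam) * (r2 + S2) - / (s0 - a) <= 0).
    { apply Hf. intros σ Hσ. apply Hs0. lra. }
    assert (lam * r1 + (1 - lam) * r2 >= Rlo) by nra. nra.
Qed.

Lemma series_lin (f g : nat -> R) (A B al be : R) :
  is_series f A -> is_series g B ->
  is_series (fun n => al * f n + be * g n) (al * A + be * B).
Proof.
  intros Hf Hg.
  apply (is_series_plus (fun n => al * f n) (fun n => be * g n) (al * A) (be * B)).
  - apply (is_series_scal al f A Hf).
  - apply (is_series_scal be g B Hg).
Qed.

Lemma zsum_lin (f g : Z -> R) (A B al be : R) :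
  is_zsum f A -> is_zsum g B ->
  is_zsum (fun l => al * f l + be * g l) (al * A + be * B).
Proof.
  intros [a1 [b1 [H1 [H2 E1]]]] [a2 [b2 [H3 [H4 E2]]]].
  exists (al * a1 + be * a2), (al * b1 + be * b2). split; [|split].
  - apply (series_lin (fun n => f (Z.of_nat n)) (fun n => g (Z.of_nat n))); assumption.
  - apply (series_lin (fun n => f (- (Z.of_nat n + 1))%Z) (fun n => g (- (Z.of_nat n + 1))%Z)); assumption.
  - subst. ring.
Qed.

Lemma space_lemma (Rf p G : R -> R) (delta : nat -> R) (K : nat) (w : Z -> R)
  (i : Z) (lam Si Si1 D plo flo Bd : R) (iota : nat -> Z) (j0 n : nat) :
  0 < delta K -> 0 < ln (INR K) -> 0 <= lam <= 1 -> 0 < D -> 0 < plo -> 0 < flo ->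
  (forall x, plo <= p x) -> (forall x, flo * exp (- Rabs x) <= G x) ->
  is_zsum (fun l => ode_term Rf p G delta K w i l) Si ->
  is_zsum (fun l => ode_term Rf p G delta K w (i + 1)%Z l) Si1 ->
  lam * Si + (1 - lam) * Si1 <= D ->
  (iota = (fun j => Z.of_nat j) \/ iota = (fun j => (- (Z.of_nat j + 1))%Z)) ->
  (forall k, (k <= n)%nat -> Rabs (IZR (iota (j0 + k)%nat)) * delta K <= Bd) ->
  exists k, (k <= n)%nat /\
    lam * (w (iota (j0 + k)%nat + i)%Z - w i) + (1 - lam) * (w (iota (j0 + k)%nat + (i + 1))%Z - w (i + 1)%Z)
    <= Bd + ln (D / (INR (S n) * (plo * flo) * hK delta K)) / ln (INR K).
Proof.
  intros Hd HL Hl HD Hp Hf Hpx HGx HSi HSi1 Hsum Hio Hbd.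
  set (L := ln (INR K)) in *. set (h := hK delta K).
  assert (Hh : 0 < h) by (unfold h, hK; fold L; apply Rmult_lt_0_compat; assumption).
  set (Th := Bd + ln (D / (INR (S n) * (plo * flo) * h)) / L).
  apply NNPP. intro Hno.
  assert (Hall : forall k, (k <= n)%nat ->
    Th < lam * (w (iota (j0 + k)%nat + i)%Z - w i) + (1 - lam) * (w (iota (j0 + k)%nat + (i + 1))%Z - w (i + 1)%Z)).
  { intros k Hk. apply Rnot_le_lt. intro Hle. apply Hno. exists k. split; assumption. }
  set (F := fun l => lam * ode_term Rf p G delta K w i l + (1 - lam) * ode_term Rf p G delta K w (i + 1)%Z l).
  assert (Hode_pos : forall j l, 0 <= ode_term Rf p G delta K w j l).
  { intros j l. unfold ode_term. fold h. fold L.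
    assert (0 < p (IZR (l + j) * delta K)) by (eapply Rlt_le_trans; [exact Hp| apply Hpx]).
    assert (0 < G (IZR l * h)).
    { eapply Rlt_le_trans; [| apply HGx]. apply Rmult_lt_0_compat; [exact Hf | apply exp_pos]. }
    assert (0 < exp (L * (w (l + j)%Z - w j))) by apply exp_pos.
    apply Rlt_le. repeat apply Rmult_lt_0_compat; assumption. }
  assert (Fpos : forall l, 0 <= F l).
  { intro l. unfold F. assert (H1 := Hode_pos i l). assert (H2 := Hode_pos (i+1)%Z l). nra. }
  assert (HF : is_zsum F (lam * Si + (1 - lam) * Si1)) by (apply zsum_lin; assumption).
  assert (Hlow : forall j l, plo * flo * h * exp (- (Rabs (IZR l) * delta K) * L) * exp (L * (w (l + j)%Z - w j))
                  <= ode_term Rf p G delta K w j l).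
  { intros j l. unfold ode_term. fold h. fold L.
    assert (EE : Rabs (IZR l * h) = Rabs (IZR l) * delta K * L).
    { rewrite Rabs_mult, (Rabs_right h) by lra. unfold h, hK. fold L. ring. }
    assert (H1 := HGx (IZR l * h)). rewrite EE in H1.
    replace (- (Rabs (IZR l) * delta K) * L) with (- (Rabs (IZR l) * delta K * L)) by ring.
    assert (plo <= p (IZR (l + j) * delta K)) by apply Hpx.
    assert (0 < exp (L * (w (l + j)%Z - w j))) by apply exp_pos.
    assert (0 < exp (- (Rabs (IZR l) * delta K * L))) by apply exp_pos.
    set (P := p (IZR (l + j) * delta K)) in *. set (GG := G (IZR l * h)) in *.
    set (X := exp (L * (w (l + j)%Z - w j))) in *.
    set (E := exp (- (Rabs (IZR l) * delta K * L))) in *.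
    replace (plo * flo * h * E * X) with (plo * (flo * E) * (h * X)) by ring.
    replace (P * h * GG * X) with (P * GG * (h * X)) by ring.
    assert (0 < h * X) by (apply Rmult_lt_0_compat; lra).
    apply Rmult_le_compat_r; [lra|].
    apply Rmult_le_compat; try lra. apply Rmult_le_pos; lra. }
  assert (Hn : 0 < INR (S n)) by (apply lt_0_INR; lia).
  assert (Hc : 0 < plo * flo * h) by (repeat apply Rmult_lt_0_compat; assumption).
  assert (Hk : forall k, (k <= n)%nat -> D / INR (S n) < F (iota (j0 + k)%nat)).
  { intros k Hk. set (m := iota (j0 + k)%nat) in *.
    specialize (Hall k Hk). fold m in Hall. specialize (Hbd k Hk). fold m in Hbd.
    set (a1 := w (m + i)%Z - w i) in *. set (b1 := w (m + (i + 1))%Z - w (i + 1)%Z) in *.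
    set (E := exp (- (Rabs (IZR m) * delta K) * L)).
    assert (HE : exp (- Bd * L) <= E).
    { unfold E. assert (- Bd * L <= - (Rabs (IZR m) * delta K) * L) by nra.
      destruct (Rle_lt_or_eq_dec _ _ H) as [H'|H']; [apply Rlt_le, exp_increasing; exact H'| rewrite H'; lra]. }
    assert (Hi1 := Hlow i m). assert (Hi2 := Hlow (i + 1)%Z m). fold E in Hi1, Hi2.
    fold a1 in Hi1. fold b1 in Hi2.
    assert (Hcv := exp_convex lam a1 b1 L Hl).
    assert (Hst : exp (L * Th) < exp (L * (lam * a1 + (1 - lam) * b1))).
    { apply exp_increasing. apply Rmult_lt_compat_l; assumption. }
    assert (HQ : 0 < D / (INR (S n) * (plo * flo) * h)).
    { apply Rdiv_lt_0_compat; [exact HD|]. repeat apply Rmult_lt_0_compat; assumption. }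
    assert (HT : exp (- Bd * L) * exp (L * Th) = D / (INR (S n) * (plo * flo) * h)).
    { rewrite <- exp_plus. unfold Th.
      replace (- Bd * L + L * (Bd + ln (D / (INR (S n) * (plo * flo) * h)) / L))
        with (ln (D / (INR (S n) * (plo * flo) * h))) by (field; lra).
      apply exp_ln; exact HQ. }
    assert (HEp : 0 < E) by apply exp_pos.
    assert (Hx1 := exp_pos (L * Th)).
    assert (Hc1 : plo * flo * h * (E * exp (L * Th)) >= D / INR (S n)).
    { assert (E * exp (L * Th) >= exp (- Bd * L) * exp (L * Th)).
      { apply Rle_ge, Rmult_le_compat_r; lra. }
      rewrite HT in H. 
      assert (plo * flo * h * (D / (INR (S n) * (plo * flo) * h)) = D / INR (S n)) by (field; lra).
      nra. }
    assert (Hc2 : plo * flo * h * (E * exp (L * Th)) < plo * flo * h * (E * (lam * exp (L * a1) + (1 - lam) * exp (L * b1)))).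
    { apply Rmult_lt_compat_l; [exact Hc|]. apply Rmult_lt_compat_l; [exact HEp|]. lra. }
    unfold F. fold m. nra. }
  assert (HH := zsum_range F _ Fpos HF iota Hio j0 n (D / INR (S n)) Hk).
  replace (INR (S n) * (D / INR (S n))) with D in HH by (field; lra). lra.
Qed.

Lemma range_exists (y d e : R) (n : nat) : 0 < d -> INR (S n) * d <= e ->
  exists (iota : nat -> Z) (j0 : nat),
    (iota = (fun j => Z.of_nat j) \/ iota = (fun j => (- (Z.of_nat j + 1))%Z)) /\
    forall k, (k <= n)%nat ->
      Rabs (IZR (iota (j0 + k)%nat)) * d <= Rabs y + e /\
      Rabs (IZR (iota (j0 + k)%nat) * d - y) <= e.
Proof.
  intros Hd Hn. rewrite S_INR in Hn.
  destruct (Rle_or_lt 0 y) as [Hy|Hy].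
  - assert (Hq : 0 <= y / d) by (apply Rdiv_le_0_compat; lra).
    destruct (nfloor_ex _ Hq) as [j0 [Hj1 Hj2]].
    exists (fun j => Z.of_nat j), j0. split; [left; reflexivity|].
    intros k Hk. rewrite <- INR_IZR_INZ, plus_INR.
    assert (INR k <= INR n) by (apply le_INR; exact Hk).
    assert (0 <= INR k) by apply pos_INR. assert (0 <= INR j0) by apply pos_INR.
    assert (Hj1' : INR j0 * d <= y).
    { apply (Rmult_le_compat_r d) in Hj1; [|lra]. unfold Rdiv in Hj1. rewrite Rmult_assoc, Rinv_l in Hj1 by lra. lra. }
    assert (Hj2' : y < (INR j0 + 1) * d).
    { apply (Rmult_lt_compat_r d) in Hj2; [|lra]. unfold Rdiv in Hj2. rewrite Rmult_assoc, Rinv_l in Hj2 by lra. lra. }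
    rewrite Rabs_right by lra. rewrite (Rabs_right y) by lra. split.
    + nra.
    + apply Rabs_le. nra.
  - assert (Hq : 0 <= - y / d) by (apply Rdiv_le_0_compat; lra).
    destruct (nfloor_ex _ Hq) as [j0 [Hj1 Hj2]].
    exists (fun j => (- (Z.of_nat j + 1))%Z), j0. split; [right; reflexivity|].
    intros k Hk. rewrite opp_IZR, plus_IZR, <- INR_IZR_INZ, plus_INR. simpl (IZR 1).
    assert (INR k <= INR n) by (apply le_INR; exact Hk).
    assert (0 <= INR k) by apply pos_INR. assert (0 <= INR j0) by apply pos_INR.
    assert (Hj1' : INR j0 * d <= - y).
    { apply (Rmult_le_compat_r d) in Hj1; [|lra]. unfold Rdiv in Hj1. rewrite Rmult_assoc, Rinv_l in Hj1 by lra. lra. }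
    assert (Hj2' : - y < (INR j0 + 1) * d).
    { apply (Rmult_lt_compat_r d) in Hj2; [|lra]. unfold Rdiv in Hj2. rewrite Rmult_assoc, Rinv_l in Hj2 by lra. lra. }
    rewrite Rabs_left by lra. rewrite (Rabs_left y) by lra. split.
    + nra.
    + apply Rabs_le. nra.
Qed.

Lemma core (Rf p G : R -> R) (delta : nat -> R) (u : nat -> Z -> R -> R)
  (Rlo plo flo : R) (HRlo : forall x, Rlo <= Rf x) (Hp : 0 < plo) (Hf : 0 < flo)
  (Hpx : forall x, plo <= p x) (HGx : forall x, flo * exp (- Rabs x) <= G x)
  (K : nat)
  (HodeK : forall (i : Z) (σ : R), 0 < σ -> exists S : R,
       is_zsum (fun l => ode_term Rf p G delta K (fun j => u K j σ) i l) S /\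
       is_derive (u K i) σ (Rf (IZR i * delta K) + S))
  (t x y eps eps' s y' : R) :
  0 < delta K -> 1 <= ln (INR K) -> 0 < t -> 0 < eps -> 0 < eps' -> eps' <= eps / 4 ->
  2 * delta K <= eps' -> Rabs (s - t) < Rmin eps t / 4 -> Rabs (y' - x) < Rmin eps t / 4 ->
  exists s1 y'', Rabs (s1 - t) < eps /\ Rabs (y'' - (x + y)) < eps /\
    lin_interp (fun j => u K j s1) (delta K) y'' <=
    lin_interp (fun j => u K j s) (delta K) y' + Rabs y + eps' +
    (Rabs (ln (/ (Rmin eps t / 4) + Rabs Rlo)) + Rabs (ln (plo * flo * eps' / 2))) / ln (INR K).
Proof.
  intros Hd HL Ht He He' He'4 Hde Hs Hy'.
  set (d := delta K) in *. set (L := ln (INR K)) in *.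
  set (T := Rmin eps t / 4) in *.
  assert (HT1 : T <= eps / 4) by (unfold T; assert (Rmin eps t <= eps) by apply Rmin_l; lra).
  assert (HT2 : T <= t / 4) by (unfold T; assert (Rmin eps t <= t) by apply Rmin_r; lra).
  assert (HT0 : 0 < T) by (unfold T; assert (0 < Rmin eps t) by (apply Rmin_pos; lra); lra).
  apply Rabs_def2 in Hs. apply Rabs_def2 in Hy'.
  set (i := Int_part (y' / d)).
  set (lam := 1 - y' / d + IZR i).
  assert (Hlam : 0 <= lam <= 1).
  { destruct (base_Int_part (y' / d)) as [B1 B2]. fold i in B1, B2. unfold lam. lra. }
  set (a := s - T).
  assert (Ha : 0 < a) by (unfold a; lra).
  destruct (time_lemma (u K i) (u K (i + 1)%Z)
     (fun σ S => is_zsum (fun l => ode_term Rf p G delta K (fun j => u K j σ) i l) S)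
     (fun σ S => is_zsum (fun l => ode_term Rf p G delta K (fun j => u K j σ) (i + 1)%Z l) S)
     (Rf (IZR i * d)) (Rf (IZR (i + 1) * d)) Rlo lam a s (HRlo _) (HRlo _) Hlam Ha ltac:(unfold a; lra))
    as [s0 [Si [Si1 [Hs0 [HSi [HSi1 [Hval Hder]]]]]]].
  { intros σ Hσ. destruct (HodeK i σ Hσ) as [S1 [A1 B1]]. destruct (HodeK (i + 1)%Z σ Hσ) as [S2 [A2 B2]].
    exists S1, S2. split; [exact A1|]. split; [exact A2|]. split; [exact B1|exact B2]. }
  set (D := / (s0 - a) + Rabs Rlo).
  assert (Hsa : 0 < s0 - a) by lra.
  assert (HD : 0 < D) by (unfold D; assert (0 < / (s0 - a)) by (apply Rinv_0_lt_compat; lra); assert (0 <= Rabs Rlo) by apply Rabs_pos; lra).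
  assert (Hsum : lam * Si + (1 - lam) * Si1 <= D) by (unfold D; assert (- Rlo <= Rabs Rlo) by (rewrite <- Rabs_Ropp; apply RRle_abs); lra).
  assert (Hq : 0 <= eps' / d) by (apply Rdiv_le_0_compat; lra).
  destruct (nfloor_ex _ Hq) as [N1 [HN1 HN2]].
  assert (HN1' : INR N1 * d <= eps').
  { apply (Rmult_le_compat_r d) in HN1; [|lra]. unfold Rdiv in HN1. rewrite Rmult_assoc, Rinv_l in HN1 by lra. lra. }
  assert (HN2' : eps' < (INR N1 + 1) * d).
  { apply (Rmult_lt_compat_r d) in HN2; [|lra]. unfold Rdiv in HN2. rewrite Rmult_assoc, Rinv_l in HN2 by lra. lra. }
  destruct N1 as [|n].
  { simpl in HN2'. lra. }
  destruct (range_exists y d eps' n Hd HN1') as [iota [j0 [Hio Hrng]]].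
  destruct (space_lemma Rf p G delta K (fun j => u K j s0) i lam Si Si1 D plo flo (Rabs y + eps') iota j0 n
     Hd ltac:(fold L; lra) Hlam HD Hp Hf Hpx HGx HSi HSi1 Hsum Hio)
    as [k [Hk Hsp]].
  { intros k Hk. apply (Hrng k Hk). }
  set (m := iota (j0 + k)%nat) in *.
  destruct (Hrng k Hk) as [Hr1 Hr2]. fold m in Hr1, Hr2.
  exists s0, (y' + IZR m * d). split; [|split].
  - unfold a in Hs0. apply Rabs_def1; lra.
  - apply Rabs_le_between in Hr2. apply Rabs_def1; lra.
  - assert (E1 : lin_interp (fun j => u K j s0) d (y' + IZR m * d) =
                 u K (m + i)%Z s0 * lam + u K (m + (i + 1))%Z s0 * (1 - lam)).
    { unfold lin_interp. cbv zeta.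
      replace ((y' + IZR m * d) / d) with (y' / d + IZR m) by (field; lra).
      rewrite Int_part_shift. fold i.
      replace (i + m + 1)%Z with (m + (i + 1))%Z by ring.
      rewrite (Z.add_comm i m). rewrite plus_IZR. unfold lam. ring. }
    assert (E2 : lin_interp (fun j => u K j s) d y' = u K i s * lam + u K (i + 1)%Z s * (1 - lam)).
    { unfold lin_interp. cbv zeta. fold i. unfold lam. ring. }
    rewrite E1, E2. cbv beta in Hsp.
    replace (s - a) with T in Hval by (unfold a; ring).
    set (C1 := ln (/ T + Rabs Rlo)).
    set (C2 := ln (plo * flo * eps' / 2)).
    set (Q := INR (S n) * (plo * flo) * hK delta K) in *.
    assert (HsaT : s0 - a <= T) by (unfold a in *; lra).
    set (lnX := ln T - ln (s0 - a)).
    assert (HlnX : 0 <= lnX) by (unfold lnX; assert (ln (s0 - a) <= ln T) by (apply ln_le; lra); lra).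
    assert (HRa : 0 <= Rabs Rlo) by apply Rabs_pos.
    assert (HC1p : 0 < / T + Rabs Rlo) by (assert (0 < / T) by (apply Rinv_0_lt_compat; lra); lra).
    assert (HlnD : ln D <= lnX + C1).
    { unfold lnX, C1. rewrite <- ln_div by lra. rewrite <- ln_mult.
      2: { apply Rdiv_lt_0_compat; lra. }
      2: exact HC1p.
      apply ln_le; [exact HD|]. unfold D.
      assert (HX1 : 1 <= T / (s0 - a)).
      { apply (Rmult_le_reg_r (s0 - a)); [lra|]. unfold Rdiv. rewrite Rmult_assoc, Rinv_l by lra. lra. }
      replace (T / (s0 - a) * (/ T + Rabs Rlo)) with (/ (s0 - a) + T / (s0 - a) * Rabs Rlo) by (field; lra).
      nra. }
    assert (HSn : eps' / 2 <= INR (S n) * d) by lra.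
    assert (HQ : plo * flo * eps' / 2 <= Q).
    { unfold Q, hK. fold d. fold L.
      replace (INR (S n) * (plo * flo) * (d * L)) with ((plo * flo) * (INR (S n) * d) * L) by ring.
      assert (0 < plo * flo) by (apply Rmult_lt_0_compat; lra).
      assert ((plo * flo) * (eps' / 2) <= (plo * flo) * (INR (S n) * d)) by (apply Rmult_le_compat_l; lra).
      assert (0 <= (plo * flo) * (INR (S n) * d)) by nra.
      nra. }
    assert (HQp : 0 < plo * flo * eps' / 2) by (repeat apply Rmult_lt_0_compat; lra).
    assert (HlnQ : C2 <= ln Q) by (unfold C2; apply ln_le; lra).
    assert (HQ0 : 0 < Q) by lra.
    rewrite ln_div in Hsp by lra.
    assert (HL0 : 0 < L) by lra.
    assert (HB : (ln D - ln Q) / L <= lnX + (Rabs C1 + Rabs C2) / L).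
    { assert (Z1 : ln D - ln Q <= lnX + (Rabs C1 + Rabs C2)).
      { assert (C1 <= Rabs C1) by apply RRle_abs.
        assert (- C2 <= Rabs C2) by (rewrite <- Rabs_Ropp; apply RRle_abs). lra. }
      assert (Z2 : lnX <= lnX * L) by nra.
      apply (Rmult_le_reg_r L); [lra|].
      unfold Rdiv. rewrite Rmult_plus_distr_r, !Rmult_assoc, !Rinv_l by lra. lra. }
    assert (Hw : u K (m + i)%Z s0 * lam + u K (m + (i + 1))%Z s0 * (1 - lam)
      = (u K i s0 * lam + u K (i + 1)%Z s0 * (1 - lam)) +
        (lam * (u K (m + i)%Z s0 - u K i s0) + (1 - lam) * (u K (m + (i + 1))%Z s0 - u K (i + 1)%Z s0))) by ring.
    rewrite Hw. unfold lnX in HB. fold L in Hsp. lra.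
Qed.

Lemma lub_spec (E : Rbar -> Prop) :
  (forall x, E x -> Rbar_le x (Rbar_lub E)) /\
  (forall b, (forall x, E x -> Rbar_le x b) -> Rbar_le (Rbar_lub E) b).
Proof. unfold Rbar_lub. destruct (Rbar_ex_lub E) as [l [H1 H2]]. simpl. split; assumption. Qed.

Lemma glb_spec (E : Rbar -> Prop) :
  (forall x, E x -> Rbar_le (Rbar_glb E) x) /\
  (forall b, (forall x, E x -> Rbar_le b x) -> Rbar_le b (Rbar_glb E)).
Proof. unfold Rbar_glb. destruct (Rbar_ex_glb E) as [l [H1 H2]]. simpl. split; assumption. Qed.

Lemma rbar_glue (Bx Bxy : R -> nat -> Rbar -> Prop) (c : R) :
  (forall e N z, Bx e N z -> exists r, z = Finite r) ->
  (forall e N eta, 0 < e -> 0 < eta -> exists e2 N2, 0 < e2 /\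
     forall r, Bx e2 N2 (Finite r) -> exists r', Bxy e N (Finite r') /\ r' <= r + c + eta) ->
  Rbar_le (Rbar_lub (fun w => exists e N, 0 < e /\ w = Rbar_glb (Bxy e N)))
          (Rbar_plus (Rbar_lub (fun w => exists e N, 0 < e /\ w = Rbar_glb (Bx e N))) (Finite c)).
Proof.
  intros Hfin Hpt.
  set (Lx := Rbar_lub (fun w => exists e N, 0 < e /\ w = Rbar_glb (Bx e N))).
  assert (KEY : forall e N, 0 < e -> forall c0, Rbar_lt Lx (Finite c0) -> forall eta, 0 < eta ->
     Rbar_le (Rbar_glb (Bxy e N)) (Finite (c0 + c + eta))).
  { intros e N He c0 Hc0 eta Heta.
    destruct (Hpt e N eta He Heta) as [e2 [N2 [He2 Hp]]].
    assert (Hg2 : Rbar_le (Rbar_glb (Bx e2 N2)) Lx).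
    { apply (proj1 (lub_spec _)). exists e2, N2. split; [exact He2|reflexivity]. }
    assert (Hlt : Rbar_lt (Rbar_glb (Bx e2 N2)) (Finite c0)) by (eapply Rbar_le_lt_trans; eassumption).
    assert (Hz : exists r, Bx e2 N2 (Finite r) /\ r < c0).
    { apply NNPP. intro Hno.
      assert (Rbar_le (Finite c0) (Rbar_glb (Bx e2 N2))).
      { apply (proj2 (glb_spec _)). intros z Hz. destruct (Hfin _ _ _ Hz) as [r ->].
        simpl. apply Rnot_lt_le. intro Hr. apply Hno. exists r. split; assumption. }
      apply (Rbar_lt_not_le _ _ Hlt H). }
    destruct Hz as [r [Hr Hrc]].
    destruct (Hp r Hr) as [r' [Hr' Hle]].
    eapply Rbar_le_trans. apply (proj1 (glb_spec _)). exact Hr'. simpl. lra. }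
  clearbody Lx. destruct Lx as [lx| |].
  - apply (proj2 (lub_spec _)). intros w [e [N [He ->]]].
    destruct (Rbar_glb (Bxy e N)) as [rw| |] eqn:Hw.
    + simpl. apply Rnot_lt_le. intro Hlt.
      set (eta := (rw - (lx + c)) / 3).
      assert (Heta : 0 < eta) by (unfold eta; lra).
      assert (H := KEY e N He (lx + eta) ltac:(simpl; lra) eta Heta). rewrite Hw in H. simpl in H.
      unfold eta in H. lra.
    + exfalso. assert (H := KEY e N He (lx + 1) ltac:(simpl; lra) 1 Rlt_0_1). rewrite Hw in H. exact H.
    + simpl. exact I.
  - simpl. destruct (Rbar_lub _); simpl; exact I.
  - simpl. apply (proj2 (lub_spec _)). intros w [e [N [He ->]]].
    destruct (Rbar_glb (Bxy e N)) as [rw| |] eqn:Hw.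
    + exfalso. assert (H := KEY e N He (rw - c - 2) I 1 Rlt_0_1). rewrite Hw in H. simpl in H. lra.
    + exfalso. assert (H := KEY e N He 0 I 1 Rlt_0_1). rewrite Hw in H. exact H.
    + simpl. exact I.
Qed.

Theorem lemma5p2
  (Rf p G : R -> R) (delta : nat -> R)
  (u0 : nat -> Z -> R)            (* u0 K i = u^{K,0}(i delta_K) *)
  (uinit : R -> R)                (* the limit u^0 of (A5) *)
  (u : nat -> Z -> R -> R)        (* u K i t = u^K_i(t) *)
  (* parameters *)
  (Hdelta_pos : forall K : nat, (1 <= K)%nat -> 0 < delta K)
  (Hdelta_lim : is_lim_seq delta 0)
  (Hh_lim : is_lim_seq (hK delta) 0)
  (* (A1) *)
  (HA1 : (exists LR : R, forall x y, Rabs (Rf x - Rf y) <= LR * Rabs (x - y)) /\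
         (exists Lp : R, forall x y, Rabs (p x - p y) <= Lp * Rabs (x - y)) /\
         (exists Rlo Rhi : R, forall x, Rlo <= Rf x <= Rhi) /\
         (exists plo phi : R, 0 < plo /\ forall x, plo <= p x <= phi))
  (* (A2) *)
  (HA2 : (forall x, 0 < G x) /\ (forall x, continuous G x) /\
         is_RInt_gen G (Rbar_locally m_infty) (Rbar_locally p_infty) 1 /\
         (exists f : R -> R, (forall x, G x = f x * exp (- Rabs x)) /\
            exists flo fhi : R, 0 < flo /\ forall x, flo <= f x <= fhi))
  (* (A3) *)
  (HA3 : exists A B1 : R, 0 < A /\ 0 < B1 /\
         forall (K : nat) (i : Z), (1 <= K)%nat ->
           u0 K i <= - A * Rabs (IZR i * delta K) + B1)
  (* (A4) *)
  (HA4 : exists L : R, 0 < L < 1 /\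
         forall (K : nat) (i : Z), (1 <= K)%nat ->
           Rabs (u0 K (i + 1)%Z - u0 K i) <= L * delta K)
  (* (A5) *)
  (HA5 : (forall x, continuous uinit x) /\
         forall a b eps : R, 0 < eps -> exists N : nat, forall K : nat,
           (1 <= K)%nat -> (N <= K)%nat -> forall x, a <= x <= b ->
             Rabs (lin_interp (u0 K) (delta K) x - uinit x) < eps)
  (* u^K solves the lattice ODE system with initial datum u^{K,0} *)
  (Hinit : forall (K : nat) (i : Z), (1 <= K)%nat -> u K i 0 = u0 K i)
  (Hcont0 : forall (K : nat) (i : Z), (1 <= K)%nat ->
     filterlim (u K i) (at_right 0) (locally (u0 K i)))
  (Hode : forall (K : nat) (i : Z) (t : R), (1 <= K)%nat -> 0 < t ->
     exists S : R,
       is_zsum (fun l => ode_term Rf p G delta K (fun j => u K j t) i l) S /\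
       is_derive (u K i) t (Rf (IZR i * delta K) + S)) :
  forall t x y : R, 0 < t ->
    Rbar_le (lower_relaxed u delta t (x + y))
            (Rbar_plus (lower_relaxed u delta t x) (Finite (Rabs y))).
Proof.
  intros t x y Ht.
  destruct HA1 as [_ [_ [[Rlo [Rhi HR]] [plo [phi [Hplo Hp]]]]]].
  destruct HA2 as [_ [_ [_ [f [Hfeq [flo [fhi [Hflo Hf]]]]]]]].
  assert (HRlo : forall x, Rlo <= Rf x) by (intro z; apply HR).
  assert (Hpx : forall x, plo <= p x) by (intro z; apply Hp).
  assert (HGx : forall x, flo * exp (- Rabs x) <= G x).
  { intro z. rewrite Hfeq. apply Rmult_le_compat_r; [apply Rlt_le, exp_pos| apply Hf]. }
  unfold lower_relaxed.
  apply (rbar_glue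
    (fun eps N z => exists (K : nat) (s y0 : R), (1 <= K)%nat /\ (N <= K)%nat /\ Rabs (s - t) < eps /\
          Rabs (y0 - x) < eps /\ z = Finite (lin_interp (fun i => u K i s) (delta K) y0))
    (fun eps N z => exists (K : nat) (s y0 : R), (1 <= K)%nat /\ (N <= K)%nat /\ Rabs (s - t) < eps /\
          Rabs (y0 - (x + y)) < eps /\ z = Finite (lin_interp (fun i => u K i s) (delta K) y0))).
  - intros e N z [K [s [y0 [_ [_ [_ [_ ->]]]]]]]. eexists; reflexivity.
  - intros e N eta He Heta.
    set (eps' := Rmin (e / 4) (eta / 2)).
    assert (Heps' : 0 < eps') by (apply Rmin_pos; lra).
    assert (Heps'1 : eps' <= e / 4) by apply Rmin_l.
    assert (Heps'2 : eps' <= eta / 2) by apply Rmin_r.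
    set (Err := Rabs (ln (/ (Rmin e t / 4) + Rabs Rlo)) + Rabs (ln (plo * flo * eps' / 2))).
    assert (HErr : 0 <= Err) by (unfold Err; assert (H1 := Rabs_pos (ln (/ (Rmin e t / 4) + Rabs Rlo))); assert (H2 := Rabs_pos (ln (plo * flo * eps' / 2))); lra).
    set (M := Rmax 1 (2 * Err / eta)).
    destruct (INR_unbounded (exp M)) as [n0 Hn0].
    apply is_lim_seq_spec in Hdelta_lim.
    destruct (Hdelta_lim (mkposreal (eps' / 2) ltac:(lra))) as [Nd HNd].
    exists (Rmin e t / 4), (Nat.max (Nat.max N Nd) (Nat.max n0 1)).
    split; [assert (0 < Rmin e t) by (apply Rmin_pos; lra); lra|].
    intros r [K [s [y0 [HK1 [HKN [Hs [Hy0 Hr]]]]]]].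
    injection Hr as ->.
    assert (HdK : 0 < delta K) by (apply Hdelta_pos; exact HK1).
    assert (Hd2 : 2 * delta K <= eps').
    { assert (H := HNd K ltac:(lia)). simpl in H. rewrite Rminus_0_r, Rabs_right in H by lra. lra. }
    assert (HlnK : M < ln (INR K)).
    { assert (INR n0 <= INR K) by (apply le_INR; lia).
      rewrite <- (ln_exp M). apply ln_increasing; [apply exp_pos|lra]. }
    assert (HM1 : 1 <= M) by apply Rmax_l.
    assert (HM2 : 2 * Err / eta <= M) by apply Rmax_r.
    destruct (core Rf p G delta u Rlo plo flo HRlo Hplo (Rlt_le_trans _ _ _ Hflo (Rle_refl _)) Hpx HGx K
                 (fun i σ Hσ => Hode K i σ HK1 Hσ) t x y e eps' s y0 HdK ltac:(lra) Ht He Heps' Heps'1 Hd2 Hs Hy0)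
      as [s1 [y1 [Hs1 [Hy1 Hval]]]].
    exists (lin_interp (fun i => u K i s1) (delta K) y1). split.
    + exists K, s1, y1. repeat split; try assumption; lia.
    + fold Err in Hval.
      assert (Err / ln (INR K) <= eta / 2).
      { assert (0 < ln (INR K)) by lra.
        apply (Rmult_le_reg_r (ln (INR K))); [lra|].
        unfold Rdiv. rewrite Rmult_assoc, Rinv_l by lra.
        assert (2 * Err / eta * eta = 2 * Err) by (field; lra).
        nra. }
      lra.
Qed.
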